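(* Let $G$ be a finite graph and $K$ a maximal clique of $G$. Then $\log_2(\log_2(|\widetilde{K}|))\le\rho(K,N(K))$.
   Context: Two vertices are equivalent if they lie in exactly the same maximal cliques of $G$; $\widetilde{K}$ is the set of equivalence classes intersecting $K$. $N(K)$ is the set of vertices outside $K$ with a neighbour in $K$. For disjoint $X,Y\subseteq V(G)$, the local cutrank $\rho(X,Y)$ is the rank over $\mathbb{F}_2$ of the submatrix of the adjacency matrix of $G$ with rows indexed by $X$ and columns indexed by $Y$. *)

(* Defs.v *)
From mathcomp Require Import all_boot all_order all_algebra.
From Stdlib Require Import Reals.
Set Implicit Arguments. Unset Strict Implicit. Unset Printing Implicit Defensive.
Import GRing.Theory.

Definition simple_graph (T : finType) (e : rel T) : Prop :=
  symmetric e /\ irreflexive e.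

Definition is_clique (T : finType) (e : rel T) (K : {set T}) : bool :=
  [forall x in K, forall y in K, (x != y) ==> e x y].

Definition is_maximal_clique (T : finType) (e : rel T) (K : {set T}) : bool :=
  is_clique e K &&
  [forall K' : {set T}, (is_clique e K' && (K \subset K')) ==> (K' == K)].

Definition mc_equiv (T : finType) (e : rel T) (u v : T) : bool :=
  [forall C : {set T}, is_maximal_clique e C ==> ((u \in C) == (v \in C))].

Definition mc_class (T : finType) (e : rel T) (v : T) : {set T} :=
  [set u | mc_equiv e u v].

(* \widetilde{K}: the set of equivalence classes intersecting K *)
Definition classes_meeting (T : finType) (e : rel T) (K : {set T}) : {set {set T}} :=
  [set mc_class e v | v in K].

Definition nbhd (T : finType) (e : rel T) (K : {set T}) : {set T} :=
  [set v | (v \notin K) && [exists u in K, e v u]].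

Local Open Scope ring_scope.
Definition cutrank (T : finType) (e : rel T) (X Y : {set T}) : nat :=
  \rank (\matrix_(i < #|X|, j < #|Y|)
           ((e (enum_val i) (enum_val j))%:R : 'F_2)).

Local Close Scope ring_scope.
Definition log2 (x : R) : R := (ln x / ln 2)%R.

(* Main.v *)
Require Import Defs.
From mathcomp Require Import all_boot all_order all_algebra.
Set Implicit Arguments. Unset Strict Implicit. Unset Printing Implicit Defensive.
Import GRing.Theory.

Lemma cliqueP (T : finType) (e : rel T) (C : {set T}) x y :
  is_clique e C -> x \in C -> y \in C -> x != y -> e x y.
Proof.
move=> /forallP/(_ x)/implyP H xC; move/forallP: (H xC) => /(_ y)/implyP H2 yC.
exact/implyP/H2.
Qed.

Lemma key1 (T : finType) (e : rel T) (K : {set T}) u v :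
  simple_graph e -> is_maximal_clique e K -> u \in K -> v \in K ->
  (forall w, w \in nbhd e K -> e u w = e v w) ->
  forall C, is_maximal_clique e C -> u \in C -> v \in C.
Proof.
move=> [sym irr] /andP[cK _] uK vK hN C /andP[cC /forallP mC] uC.
apply/negPn/negP => vC.
have hv : forall y, y \in C -> e v y.
  move=> y yC; case: (y =P u) => [->|/eqP yu].
    apply: (cliqueP cK) => //; by apply/eqP => vu; rewrite vu uC in vC.
  case yK: (y \in K).
    apply: (cliqueP cK) => //; by apply/eqP => vy; rewrite vy yC in vC.
  have eu : e u y by apply: (cliqueP cC) => //; rewrite eq_sym.
  have yN : y \in nbhd e K.
    rewrite inE yK /=; apply/existsP; exists u; by rewrite uK sym.
  by rewrite -hN.
have : (v |: C) == C.
  apply: (implyP (mC (v |: C))); rewrite subsetUr andbT.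
  apply/forallP => x; apply/implyP => xin; apply/forallP => y; apply/implyP => yin.
  apply/implyP => xy.
  rewrite !inE in xin yin.
  case/orP: xin => [/eqP xv|xC]; case/orP: yin => [/eqP yv|yC].
  - by rewrite xv yv eqxx in xy.
  - by rewrite xv; apply: hv.
  - by rewrite yv sym; apply: hv.
  - exact: (cliqueP cC).
move/eqP => E; by rewrite -E setU11 in vC.
Qed.

Lemma key (T : finType) (e : rel T) (K : {set T}) u v :
  simple_graph e -> is_maximal_clique e K -> u \in K -> v \in K ->
  (forall w, w \in nbhd e K -> e u w = e v w) ->
  mc_class e u = mc_class e v.
Proof.
move=> se mK uK vK hN.
have huv : forall C, is_maximal_clique e C -> (u \in C) = (v \in C).
  move=> C mC; apply/idP/idP.
    exact: (key1 se mK uK vK hN).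
  by apply: (key1 se mK vK uK) => // w wN; rewrite hN.
apply/setP => x; rewrite !inE /mc_equiv; apply: eq_forallb => C.
case mC: (is_maximal_clique e C) => //=.
by rewrite (huv C mC).
Qed.

Local Open Scope ring_scope.

Lemma card_classes (T : finType) (e : rel T) (K : {set T}) :
  simple_graph e -> is_maximal_clique e K ->
  (#|classes_meeting e K| <= expn 2 (cutrank e K (nbhd e K)))%N.
Proof.
move=> se mK.
rewrite /cutrank.
set M := (\matrix_(i < #|K|, j < #|nbhd e K|) _).
set B := row_base M.
pose g (i : 'I_#|K|) := mc_class e (enum_val i).
pose k (y : 'rV['F_2]_#|nbhd e K|) :=
  match [pick i | row i M == y] with Some i => g i | None => set0 end.
pose k' (u : 'rV['F_2]_(\rank M)) := k (u *m B).
have rowP : forall i j, row i M = row j M -> forall w, w \in nbhd e K ->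
    e (enum_val i) w = e (enum_val j) w.
  move=> i j Hr w wN.
  have := congr1 (fun A : 'rV_ _ => A 0 (enum_rank_in wN w)) Hr.
  rewrite !mxE enum_rankK_in //.
  by case: (e _ w); case: (e _ w).
have sub : classes_meeting e K \subset k' @: [set: 'rV['F_2]_(\rank M)].
  apply/subsetP => X /imsetP[v vK ->].
  pose i := enum_rank_in vK v.
  have iv : enum_val i = v by rewrite /i enum_rankK_in.
  apply/imsetP; exists (row i M *m pinvmx B); first by [].
  rewrite /k' mulmxKpV; last by rewrite eq_row_base row_sub.
  rewrite /k; case: pickP => [j /eqP Hj | H]; last by have := H i; rewrite eqxx.
  rewrite /g -iv; apply: (key se mK); try exact: enum_valP.
  by move=> w wN; rewrite (rowP _ _ Hj).
apply: leq_trans (subset_leq_card sub) _.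
apply: leq_trans (leq_imset_card _ _) _.
by rewrite cardsT card_mx card_Fp // mul1n.
Qed.
Local Close Scope ring_scope.
From Stdlib Require Import Reals Lra.
Lemma ln_nonpos (x : R) : (x <= 0)%R -> ln x = 0%R.
Proof. move=> h; rewrite /ln; case: Rlt_dec => // a; exfalso; lra. Qed.

Lemma ln_mono (x y : R) : (0 < x)%R -> (x <= y)%R -> (ln x <= ln y)%R.
Proof.
move=> hx [h|->]; last by right.
left; exact: ln_increasing.
Qed.

Lemma INR_exp2 (r : nat) : INR (expn 2 r) = (2 ^ r)%R.
Proof.
elim: r => [|r IH]; first by []. rewrite expnS mult_INR IH /=; ring.
Qed.

Lemma INR_le_pow2 (r : nat) : (INR r <= 2 ^ r)%R.
Proof.
elim: r => [|r IH]; first (simpl; lra).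
rewrite S_INR /=. have : (1 <= 2 ^ r)%R by apply: pow_R1_Rle; lra. lra.
Qed.

Lemma ln2_pos : (0 < ln 2)%R.
Proof. have := ln_lt_2; lra. Qed.

Lemma log2_le (y : R) (r : nat) : (y <= INR r)%R -> (log2 y <= INR r)%R.
Proof.
move=> hy; rewrite /log2.
have l2 := ln2_pos.
case: (Rle_lt_dec y 0) => hy0.
  rewrite ln_nonpos // /Rdiv Rmult_0_l; apply: pos_INR.
apply Rmult_le_reg_r with (ln 2); first lra.
rewrite /Rdiv Rmult_assoc Rinv_l; last lra.
rewrite Rmult_1_r -ln_pow; last lra.
apply: ln_mono => //. apply: Rle_trans hy _. exact: INR_le_pow2.
Qed.

Lemma real_part (n r : nat) : (n <= expn 2 r)%N -> (log2 (log2 (INR n)) <= INR r)%R.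
Proof.
move=> h; apply: log2_le; rewrite /log2.
have l2 := ln2_pos.
case: (Rle_lt_dec (INR n) 0) => hy0.
  rewrite ln_nonpos // /Rdiv Rmult_0_l; apply: pos_INR.
apply Rmult_le_reg_r with (ln 2); first lra.
rewrite /Rdiv Rmult_assoc Rinv_l; last lra.
rewrite Rmult_1_r -ln_pow; last lra.
apply: ln_mono => //. rewrite -INR_exp2. apply: le_INR. exact/leP.
Qed.

Theorem corollary7p3 (T : finType) (e : rel T) (K : {set T}) :
  simple_graph e -> is_maximal_clique e K ->
  (log2 (log2 (INR #|classes_meeting e K|)) <= INR (cutrank e K (nbhd e K)))%R.
Proof.
move=> se mK; apply: real_part; exact: card_classes.
Qed.
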